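(* Let \((X,d)\) be a metric space. The following statements are equivalent: (i) \(d\) is an ultrametric, i.e. \(d(x,y)\le\max\{d(x,z),d(z,y)\}\) for all \(x,y,z\in X\); (ii) \(f\circ d\) is a metric on \(X\) for every amenable and increasing function \(f\colon[0,\infty)\to[0,\infty)\); (iii) \(f\circ d\) is a metric on \(X\) for every amenable function \(f\colon[0,\infty)\to[0,\infty)\) which satisfies \(f(a)\le 2f(b)\) whenever \(0\le a\le b\).
   Context: A function \(f\colon[0,\infty)\to[0,\infty)\) is amenable if \(f^{-1}(\{0\})=\{0\}\), and increasing if \(a\ge b\) implies \(f(a)\ge f(b)\). *)

(* Defs.v *)
From Stdlib Require Import Reals.
Open Scope R_scope.

Definition is_metric (X : Type) (d : X -> X -> R) : Prop :=
  (forall x y, 0 <= d x y) /\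
  (forall x y, d x y = 0 <-> x = y) /\
  (forall x y, d x y = d y x) /\
  (forall x y z, d x y <= d x z + d z y).

Definition is_ultrametric_ineq (X : Type) (d : X -> X -> R) : Prop :=
  forall x y z, d x y <= Rmax (d x z) (d z y).

(* A function f : [0,oo) -> [0,oo) is represented by f : R -> R mapping
   [0,oo) into [0,oo); its values on negative reals are irrelevant. *)
Definition maps_nonneg (f : R -> R) : Prop :=
  forall t, 0 <= t -> 0 <= f t.

Definition amenable (f : R -> R) : Prop :=
  forall t, 0 <= t -> (f t = 0 <-> t = 0).

Definition increasing_nonneg (f : R -> R) : Prop :=
  forall a b, 0 <= b -> b <= a -> f b <= f a.

Definition quasi_increasing2 (f : R -> R) : Prop :=
  forall a b, 0 <= a -> a <= b -> f a <= 2 * f b.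

(* Main.v *)
Require Import Defs.
From Stdlib Require Import Reals Lra.
Open Scope R_scope.

Lemma inc_quasi (f : R -> R) : maps_nonneg f -> increasing_nonneg f -> quasi_increasing2 f.
Proof.
  intros hn hi a b ha hab. pose proof (hi b a ha hab). pose proof (hn b ltac:(lra)). lra.
Qed.

Lemma L1 (X : Type) (d : X -> X -> R) (hd : is_metric X d) :
  is_ultrametric_ineq X d ->
  forall f : R -> R, maps_nonneg f -> amenable f -> quasi_increasing2 f ->
        is_metric X (fun x y => f (d x y)).
Proof.
  destruct hd as [h0 [hz [hs ht]]].
  intros hu f hn ha hq. split; [|split; [|split]].
  - intros x y. apply hn, h0.
  - intros x y. simpl. pose proof (ha (d x y) (h0 x y)). pose proof (hz x y). tauto.
  - intros x y. simpl. rewrite hs. reflexivity.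
  - intros x y z. simpl.
    pose proof (hu x y z) as u1. pose proof (hu x z y) as u2.
    pose proof (hu z y x) as u3.
    rewrite (hs z x) in u3. rewrite (hs y z) in u2.
    set (a := d x y) in *. set (b := d x z) in *. set (c := d z y) in *.
    assert (0 <= a) by apply h0. assert (0 <= b) by apply h0. assert (0 <= c) by apply h0.
    pose proof (hn b ltac:(lra)). pose proof (hn c ltac:(lra)).
    apply Rmax_Rle in u1. apply Rmax_Rle in u2. apply Rmax_Rle in u3.
    destruct (Rlt_dec b a) as [Hba|Hba].
    { assert (E : c = a) by lra. rewrite E. lra. }
    destruct (Rlt_dec c a) as [Hca|Hca].
    { assert (E : b = a) by lra. rewrite E. lra. }
    assert (E : c = b) by lra. pose proof (hq a b ltac:(lra) ltac:(lra)). rewrite E. lra.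
Qed.

Lemma L3 (X : Type) (d : X -> X -> R) (hd : is_metric X d) :
  (forall f : R -> R, maps_nonneg f -> amenable f -> increasing_nonneg f ->
        is_metric X (fun x y => f (d x y))) -> is_ultrametric_ineq X d.
Proof.
  intros H x y z.
  destruct (Rle_dec (d x y) (Rmax (d x z) (d z y))) as [ok|nok]; [exact ok|].
  exfalso.
  set (m := Rmax (d x z) (d z y)) in *.
  assert (hm : 0 <= m). { unfold m. destruct hd as [h0 _]. pose proof (h0 x z). unfold Rmax; destruct Rle_dec; lra. }
  set (f := fun t => if Rle_dec t 0 then 0 else if Rle_dec t m then 1 else 3).
  assert (hf : is_metric X (fun x y => f (d x y))).
  { apply H.
    - intros t _. unfold f. destruct Rle_dec; [lra|]. destruct Rle_dec; lra.
    - intros t ht. unfold f. destruct Rle_dec; [split; intros; lra|]. destruct Rle_dec; split; intros; lra.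
    - intros a b hb hab. unfold f.
      destruct (Rle_dec b 0); destruct (Rle_dec a 0); destruct (Rle_dec b m); destruct (Rle_dec a m); lra. }
  destruct hf as [_ [_ [_ ht]]]. pose proof (ht x y z) as T. simpl in T.
  assert (e1 : f (d x y) = 3).
  { unfold f. destruct Rle_dec. { destruct hd as [h0 _]. pose proof (h0 x z). unfold m, Rmax in *. destruct Rle_dec in nok; lra. }
    destruct Rle_dec; lra. }
  assert (forall t, f t <= 1 \/ m < t).
  { intros t. unfold f. destruct Rle_dec; [lra|]. destruct Rle_dec; lra. }
  assert (d x z <= m /\ d z y <= m) by (unfold m, Rmax; destruct Rle_dec; lra).
  destruct (H0 (d x z)); destruct (H0 (d z y)); lra.
Qed.

Theorem theorem2p12 (X : Type) (d : X -> X -> R) (hd : is_metric X d) :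
  (is_ultrametric_ineq X d <->
     (forall f : R -> R, maps_nonneg f -> amenable f -> increasing_nonneg f ->
        is_metric X (fun x y => f (d x y)))) /\
  (is_ultrametric_ineq X d <->
     (forall f : R -> R, maps_nonneg f -> amenable f -> quasi_increasing2 f ->
        is_metric X (fun x y => f (d x y)))).
Proof.
  split; split.
  - intros hu f hn ha hi. apply (L1 X d hd hu f hn ha (inc_quasi f hn hi)).
  - apply L3; exact hd.
  - apply L1; exact hd.
  - intros H. apply (L3 X d hd). intros f hn ha hi. apply H; auto. apply inc_quasi; auto.
Qed.
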